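(* Let $\mathbf L\in\mathbb R_+^{n\times k}$. If there exist $\mathbf p\in\operatorname{relint}(\Delta_n)$ and $c\in\mathbb R_+$ such that $\mathbf p^\top\boldsymbol\ell_t=c$ for all $t\in[k]$, then $\mathrm{CCdim}(\mathbf L)\ge\operatorname{affdim}(\mathbf L)-1$.
   Context: Notation: $[m]=\{1,\dots,m\}$; $\Delta_n=\{\mathbf p\in\mathbb R_+^n:\sum_i p_i=1\}$, with relative interior the points having all entries strictly positive. A loss matrix $\mathbf L\in\mathbb R_+^{n\times k}$ has columns $\boldsymbol\ell_t$, $t\in[k]$; $\operatorname{affdim}(\mathbf L)$ is the dimension of the affine hull of $\{\boldsymbol\ell_1,\dots,\boldsymbol\ell_k\}$. Standing assumption: for each $t\in[k]$ there is $\mathbf q\in\Delta_n$ with $\operatorname{argmin}_{t'}\mathbf q^\top\boldsymbol\ell_{t'}=\{t\}$. A surrogate loss $\boldsymbol\psi:\mathcal C\to\mathbb R_+^n$ ($\mathcal C\subseteq\mathbb R^d$ convex) is $\mathbf L$-calibrated if there is $\mathrm{pred}:\mathcal C\to[k]$ such that for all $\mathbf q\in\Delta_n$: $\inf_{\mathbf u\in\mathcal C:\mathrm{pred}(\mathbf u)\notin\operatorname{argmin}_t\mathbf q^\top\boldsymbol\ell_t}\mathbf q^\top\boldsymbol\psi(\mathbf u)>\inf_{\mathbf u\in\mathcal C}\mathbf q^\top\boldsymbol\psi(\mathbf u)$. $\mathrm{CCdim}(\mathbf L)$ is the smallest $d\in\mathbb Z_+$ for which there exist a convex set $\mathcal C\subseteq\mathbb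 R^d$ and a convex (componentwise convex) $\mathbf L$-calibrated surrogate $\boldsymbol\psi:\mathcal C\to\mathbb R_+^n$ ($\infty$ if none exists). *)

(* Defs.v *)
From Stdlib Require Import Reals List.
Import ListNotations.
Open Scope R_scope.

(* Vectors in R^m are represented as functions nat -> R; only the
   coordinates 0..m-1 are meaningful. *)

Fixpoint rsum (m : nat) (f : nat -> R) : R :=
  match m with
  | O => 0
  | S m' => rsum m' f + f m'
  end.

Definition lsum (s : list nat) (f : nat -> R) : R :=
  fold_right (fun j acc => f j + acc) 0 s.

Definition dot (n : nat) (p v : nat -> R) : R := rsum n (fun i => p i * v i).

Definition in_simplex (n : nat) (q : nat -> R) : Prop :=
  (forall i, (i < n)%nat -> 0 <= q i) /\ rsum n q = 1.

Definition in_relint_simplex (n : nat) (q : nat -> R) : Prop :=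
  (forall i, (i < n)%nat -> 0 < q i) /\ rsum n q = 1.

Definition col (L : nat -> nat -> R) (t : nat) : nat -> R := fun i => L i t.

Definition nonneg_matrix (n k : nat) (L : nat -> nat -> R) : Prop :=
  forall i t, (i < n)%nat -> (t < k)%nat -> 0 <= L i t.

Definition in_argmin (n k : nat) (L : nat -> nat -> R) (q : nat -> R) (t : nat) : Prop :=
  (t < k)%nat /\ forall t', (t' < k)%nat -> dot n q (col L t) <= dot n q (col L t').

Definition standing_assumption (n k : nat) (L : nat -> nat -> R) : Prop :=
  forall t, (t < k)%nat ->
    exists q, in_simplex n q /\ (forall t', in_argmin n k L q t' <-> t' = t).

Definition convex_set (d : nat) (C : (nat -> R) -> Prop) : Prop :=
  (forall u, C u -> forall j, (d <= j)%nat -> u j = 0) /\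
  (forall u v lam, C u -> C v -> 0 <= lam <= 1 ->
     C (fun j => lam * u j + (1 - lam) * v j)).

Definition nonneg_surrogate (n : nat) (C : (nat -> R) -> Prop) (psi : (nat -> R) -> nat -> R) : Prop :=
  forall u, C u -> forall i, (i < n)%nat -> 0 <= psi u i.

Definition convex_surrogate (n : nat) (C : (nat -> R) -> Prop) (psi : (nat -> R) -> nat -> R) : Prop :=
  forall i u v lam, (i < n)%nat -> C u -> C v -> 0 <= lam <= 1 ->
    psi (fun j => lam * u j + (1 - lam) * v j) i <= lam * psi u i + (1 - lam) * psi v i.

(* inf_{u in C | S u} f u  >  inf_{u in C} f u, for f valued in R (infima taken
   in the extended reals, inf of the empty set = +infinity):
   some lower bound r of f on {S} is strictly above some value of f on C. *)
Definition inf_gt (C S : (nat -> R) -> Prop) (f : (nat -> R) -> R) : Prop :=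
  exists r, (forall u, C u -> S u -> r <= f u) /\ (exists u, C u /\ f u < r).

Definition calibrated (n k : nat) (L : nat -> nat -> R)
  (C : (nat -> R) -> Prop) (psi : (nat -> R) -> nat -> R) : Prop :=
  exists pred : (nat -> R) -> nat,
    (forall u, C u -> (pred u < k)%nat) /\
    forall q, in_simplex n q ->
      inf_gt C (fun u => ~ in_argmin n k L q (pred u)) (fun u => dot n q (psi u)).

(* d is admissible in the definition of CCdim(L): there is a convex set C in R^d
   and a convex L-calibrated surrogate psi : C -> R_+^n.
   CCdim(L) is the least admissible d (infinity if none). *)
Definition CCdim_admissible (n k : nat) (L : nat -> nat -> R) (d : nat) : Prop :=
  exists (C : (nat -> R) -> Prop) (psi : (nat -> R) -> nat -> R),
    convex_set d C /\ nonneg_surrogate n C psi /\ convex_surrogate n C psi /\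
    calibrated n k L C psi.

Definition aff_indep_cols (n k : nat) (L : nat -> nat -> R) (s : list nat) : Prop :=
  NoDup s /\ (forall j, In j s -> (j < k)%nat) /\
  forall lam : nat -> R,
    lsum s lam = 0 ->
    (forall i, (i < n)%nat -> lsum s (fun j => lam j * L i j) = 0) ->
    forall j, In j s -> lam j = 0.

(* affdim(L) = m: the affine hull of the columns has dimension m, i.e. the
   maximal number of affinely independent columns is m+1. *)
Definition is_affdim (n k : nat) (L : nat -> nat -> R) (m : nat) : Prop :=
  (exists s, aff_indep_cols n k L s /\ length s = S m) /\
  (forall s, aff_indep_cols n k L s -> (length s <= S m)%nat).

(* Main.v *)
Require Import Defs.
From Stdlib Require Import Reals List Lra Lia Psatz Classical ClassicalEpsilon FunctionalExtensionality ZArith.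
Open Scope R_scope.

Lemma rsum_S m f : rsum (S m) f = rsum m f + f m.
Proof. reflexivity. Qed.

Lemma rsum_ext m f g : (forall i, (i < m)%nat -> f i = g i) -> rsum m f = rsum m g.
Proof.
  induction m; intros H; simpl; auto.
  rewrite IHm by (intros; apply H; lia). rewrite H by lia. reflexivity.
Qed.

Lemma rsum_plus m f g : rsum m (fun i => f i + g i) = rsum m f + rsum m g.
Proof. induction m; simpl; [lra|]. rewrite IHm. lra. Qed.

Lemma rsum_minus m f g : rsum m (fun i => f i - g i) = rsum m f - rsum m g.
Proof. induction m; simpl; [lra|]. rewrite IHm. lra. Qed.

Lemma rsum_scal m c f : rsum m (fun i => c * f i) = c * rsum m f.
Proof. induction m; simpl; [lra|]. rewrite IHm. lra. Qed.

Lemma rsum_scal_r m c f : rsum m (fun i => f i * c) = rsum m f * c.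
Proof. induction m; simpl; [lra|]. rewrite IHm. lra. Qed.

Lemma rsum_zero m f : (forall i, (i < m)%nat -> f i = 0) -> rsum m f = 0.
Proof. intros H. rewrite (rsum_ext m f (fun _ => 0)) by auto. induction m; simpl; [lra|]. rewrite IHm by (intros; apply H; lia). lra. Qed.

Lemma rsum_le m f g : (forall i, (i < m)%nat -> f i <= g i) -> rsum m f <= rsum m g.
Proof.
  induction m; intros H; simpl; [lra|].
  assert (rsum m f <= rsum m g) by (apply IHm; intros; apply H; lia).
  specialize (H m ltac:(lia)). lra.
Qed.

Lemma rsum_nonneg m f : (forall i, (i < m)%nat -> 0 <= f i) -> 0 <= rsum m f.
Proof. intros H. replace 0 with (rsum m (fun _ => 0)) by (apply rsum_zero; auto). apply rsum_le; auto. Qed.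

Lemma rsum_swap m n (f : nat -> nat -> R) :
  rsum m (fun i => rsum n (fun j => f i j)) = rsum n (fun j => rsum m (fun i => f i j)).
Proof.
  induction m; simpl.
  - symmetry; apply rsum_zero; auto.
  - rewrite IHm. rewrite <- rsum_plus. reflexivity.
Qed.

Lemma rsum_add_len a b f : rsum (a + b) f = rsum a f + rsum b (fun i => f (a + i)%nat).
Proof.
  induction b; simpl.
  - rewrite Nat.add_0_r. lra.
  - rewrite Nat.add_succ_r. simpl. rewrite IHb. lra.
Qed.

Lemma rsum_first m f : rsum (S m) f = f O + rsum m (fun i => f (S i)).
Proof.
  induction m; simpl; [lra|]. simpl in IHm. rewrite IHm. lra.
Qed.

Lemma rsum_indic m j (a : nat -> R) : (j < m)%nat ->
  rsum m (fun i => if Nat.eq_dec i j then a i else 0) = a j.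
Proof.
  induction m; intros H; [lia|]. simpl.
  destruct (Nat.eq_dec m j).
  - subst. rewrite rsum_zero. lra. intros i Hi. destruct (Nat.eq_dec i j); [lia|auto].
  - rewrite IHm by lia. lra.
Qed.

Lemma rsum_abs m f : Rabs (rsum m f) <= rsum m (fun i => Rabs (f i)).
Proof.
  induction m; simpl. rewrite Rabs_R0; lra.
  eapply Rle_trans. apply Rabs_triang. lra.
Qed.

Lemma rsum_sq_zero m f : rsum m (fun i => f i * f i) = 0 -> forall i, (i < m)%nat -> f i = 0.
Proof.
  induction m; intros H i Hi; [lia|]. simpl in H.
  assert (0 <= rsum m (fun i => f i * f i)) by (apply rsum_nonneg; intros; nra).
  assert (f m * f m = 0) by nra.
  assert (rsum m (fun i => f i * f i) = 0) by nra.
  destruct (Nat.eq_dec i m). subst; nra. apply IHm; auto; lia.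
Qed.

Lemma LA : forall N M (a : nat -> nat -> R), (M < N)%nat ->
  exists lam : nat -> R, (exists k, (k < N)%nat /\ lam k <> 0) /\
    forall i, (i < M)%nat -> rsum N (fun k => a i k * lam k) = 0.
Proof.
  induction N; intros M a HMN; [lia|].
  destruct (classic (exists i0, (i0 < M)%nat /\ a i0 N <> 0)) as [[i0 [Hi0 Ha]]|Hno].
  - set (sg := fun i => if Nat.ltb i i0 then i else S i).
    set (b := fun i k => a (sg i) k - a (sg i) N / a i0 N * a i0 k).
    destruct (IHN (M - 1)%nat b ltac:(lia)) as [lam' [[k0 [Hk0 Hnz]] Hrows]].
    set (lN := - rsum N (fun k => a i0 k * lam' k) / a i0 N).
    exists (fun k => if Nat.eq_dec k N then lN else lam' k). split.
    + exists k0. split; [lia|]. destruct (Nat.eq_dec k0 N); [lia|auto].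
    + intros i Hi. simpl.
      rewrite (rsum_ext N _ (fun k => a i k * lam' k)) by (intros k Hk; destruct (Nat.eq_dec k N); [lia|auto]).
      destruct (Nat.eq_dec N N); [|lia].
      destruct (Nat.eq_dec i i0).
      * subst i. unfold lN. field. auto.
      * set (i' := if Nat.ltb i i0 then i else (i - 1)%nat).
        assert (Hsg : sg i' = i).
        { unfold sg, i'. destruct (Nat.ltb i i0) eqn:E.
          - rewrite E. auto.
          - apply Nat.ltb_ge in E. destruct (Nat.ltb (i-1) i0) eqn:E2.
            + apply Nat.ltb_lt in E2. lia.
            + lia. }
        assert (Hi' : (i' < M - 1)%nat).
        { unfold i'. destruct (Nat.ltb i i0) eqn:E. apply Nat.ltb_lt in E. lia. apply Nat.ltb_ge in E. lia. }
        specialize (Hrows i' Hi'). unfold b in Hrows. rewrite Hsg in Hrows.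
        rewrite (rsum_ext N _ (fun k => a i k * lam' k - a i N / a i0 N * (a i0 k * lam' k))) in Hrows by (intros; ring).
        rewrite rsum_minus, rsum_scal in Hrows.
        unfold lN. field_simplify; [|auto]. 
        replace (rsum N (fun k => a i k * lam' k)) with (a i N / a i0 N * rsum N (fun k => a i0 k * lam' k)) by lra.
        field. auto.
  - exists (fun k => if Nat.eq_dec k N then 1 else 0). split.
    + exists N. split; [lia|]. destruct (Nat.eq_dec N N); [lra|lia].
    + intros i Hi. simpl. rewrite rsum_zero.
      * destruct (Nat.eq_dec N N); [|lia].
        assert (a i N = 0) by (apply NNPP; intro; apply Hno; exists i; auto). rewrite H. ring.
      * intros k Hk. destruct (Nat.eq_dec k N); [lia|ring].
Qed.

Section HB.
Variable I : Type.
Variable Ieq : forall a b : I, {a = b} + {a <> b}.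

Definition sumL (l : list I) (g x : I -> R) : R := fold_right (fun c acc => g c * x c + acc) 0 l.
Definition suppL (l : list I) (x : I -> R) : Prop := forall c, ~ In c l -> x c = 0.

Lemma sumL_ext l g x y : (forall c, In c l -> x c = y c) -> sumL l g x = sumL l g y.
Proof. induction l; simpl; intros H; auto. rewrite H by auto. rewrite IHl by auto. auto. Qed.

Lemma sumL_ext_g l g h x : (forall c, In c l -> g c = h c) -> sumL l g x = sumL l h x.
Proof. induction l; simpl; intros H; auto. rewrite H by auto. rewrite IHl by auto. auto. Qed.

Lemma sumL_lin l g x y a b : sumL l g (fun c => a * x c + b * y c) = a * sumL l g x + b * sumL l g y.
Proof. induction l; simpl; [lra|]. rewrite IHl. ring. Qed.

Lemma sumL_app l1 l2 g x : sumL (l1 ++ l2) g x = sumL l1 g x + sumL l2 g x.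
Proof. induction l1; simpl; [lra|]. rewrite IHl1. ring. Qed.

Variable D : (I -> R) -> Prop.
Variable phi : (I -> R) -> R.
Hypothesis Dconv : forall x y lam, D x -> D y -> 0 <= lam <= 1 -> D (fun c => lam * x c + (1 - lam) * y c).
Hypothesis Dsym : forall x, D x -> exists r, 0 < r /\ D (fun c => - r * x c).
Hypothesis phiconv : forall x y lam, D x -> D y -> 0 <= lam <= 1 ->
  phi (fun c => lam * x c + (1 - lam) * y c) <= lam * phi x + (1 - lam) * phi y.

Definition ec (c : I) : I -> R := fun c' => if Ieq c' c then 1 else 0.

Lemma HB_step : forall l c g, ~ In c l ->
  (forall x, D x -> suppL l x -> sumL l g x <= phi x) ->
  exists a, forall x, D x -> suppL (c :: l) x -> a * x c + sumL l g x <= phi x.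
Proof.
  intros l c g Hc Hl.
  set (Up := fun z => exists y t, 0 < t /\ suppL l y /\ D (fun c' => y c' + t * ec c c') /\
                         z = (phi (fun c' => y c' + t * ec c c') - sumL l g y) / t).
  set (Lo := fun z => exists y s, 0 < s /\ suppL l y /\ D (fun c' => y c' - s * ec c c') /\
                         z = (sumL l g y - phi (fun c' => y c' - s * ec c c')) / s).
  assert (sumL_ec : forall y t, sumL l g (fun c' => y c' + t * ec c c') = sumL l g y).
  { intros y t. apply sumL_ext. intros c' Hc'. unfold ec. destruct (Ieq c' c); [subst; tauto|ring]. }
  assert (sumL_ec' : forall y t, sumL l g (fun c' => y c' - t * ec c c') = sumL l g y).
  { intros y t. apply sumL_ext. intros c' Hc'. unfold ec. destruct (Ieq c' c); [subst; tauto|ring]. }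
  assert (Key : forall z1 z2, Lo z1 -> Up z2 -> z1 <= z2).
  { intros z1 z2 [y' [s [Hs [Sy' [Dy' E1]]]]] [y [t [Ht [Sy [Dy E2]]]]]. subst z1 z2.
    set (lam := t / (s + t)).
    assert (Hlt : lam * (s + t) = t) by (unfold lam; field; lra).
    assert (Hlam : 0 <= lam <= 1) by (split; nra).
    set (M := fun c' => lam * (y' c' - s * ec c c') + (1 - lam) * (y c' + t * ec c c')).
    assert (DM : D M) by (apply Dconv; auto).
    assert (SM : suppL l M).
    { intros c' Hc'. unfold M, ec. destruct (Ieq c' c).
      - subst c'. rewrite (Sy' c Hc), (Sy c Hc). unfold lam. field. lra.
      - rewrite (Sy' c' Hc'), (Sy c' Hc'). ring. }
    assert (H1 := Hl M DM SM).
    assert (H2 : phi M <= lam * phi (fun c' => y' c' - s * ec c c') + (1 - lam) * phi (fun c' => y c' + t * ec c c')) by (apply phiconv; auto).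
    unfold M in H1 at 1. rewrite sumL_lin, sumL_ec, sumL_ec' in H1.
    assert (lam * (sumL l g y' - phi (fun c' => y' c' - s * ec c c')) + (1 - lam) * (sumL l g y - phi (fun c' => y c' + t * ec c c')) <= 0) by lra.
    unfold lam in H. 
    apply Rmult_le_reg_r with (r := s * t / (s + t)). apply Rdiv_lt_0_compat; nra.
    replace ((sumL l g y' - phi (fun c' => y' c' - s * ec c c')) / s * (s * t / (s + t))) with
      (t / (s+t) * (sumL l g y' - phi (fun c' => y' c' - s * ec c c'))) by (field; lra).
    replace ((phi (fun c' => y c' + t * ec c c') - sumL l g y) / t * (s * t / (s + t))) with
      (s / (s+t) * (phi (fun c' => y c' + t * ec c c') - sumL l g y)) by (field; lra).
    replace (1 - t / (s + t)) with (s / (s+t)) in H by (field; lra). lra. }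
  assert (decomp : forall x, suppL (c :: l) x ->
     suppL l (fun c' => if Ieq c' c then 0 else x c') /\
     x = (fun c' => (fun c'' => if Ieq c'' c then 0 else x c'') c' + x c * ec c c')).
  { intros x Sx. split.
    - intros c' Hc'. destruct (Ieq c' c); auto. apply Sx. simpl. intuition.
    - apply functional_extensionality. intros c'. unfold ec. destruct (Ieq c' c); [subst; ring|ring]. }
  assert (sumy : forall x, sumL l g (fun c' => if Ieq c' c then 0 else x c') = sumL l g x).
  { intros x. apply sumL_ext. intros c' Hc'. destruct (Ieq c' c); [subst; tauto|auto]. }
  destruct (classic (exists z, Lo z)) as [[z0 Hz0]|HnoLo].
  -
    assert (HUp : exists z, Up z).
    { destruct Hz0 as [y' [s [Hs [Sy' [Dy' _]]]]]. destruct (Dsym _ Dy') as [r [Hr Dr]].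
      exists ((phi (fun c' => (fun c'' => - r * y' c'') c' + (r * s) * ec c c') - sumL l g (fun c'' => - r * y' c'')) / (r * s)).
      exists (fun c'' => - r * y' c''), (r * s). split; [nra|]. split.
      - intros c' Hc'. rewrite Sy'; auto; ring.
      - split; auto. replace (fun c' => - r * y' c' + r * s * ec c c') with (fun c' => - r * (y' c' - s * ec c c')); auto.
        apply functional_extensionality; intros; ring. }
    destruct HUp as [z1 Hz1].
    assert (Hb : bound Lo) by (exists z1; intros z Hz; apply Key; auto).
    destruct (completeness Lo Hb (ex_intro _ z0 Hz0)) as [a [Hub Hlub]].
    exists a. intros x Dx Sx.
    destruct (decomp x Sx) as [Sy Ex].
    set (y := fun c' => if Ieq c' c then 0 else x c') in *.
    rewrite <- (sumy x). fold y. clear Ex.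
    assert (Ex : x = (fun c' => y c' + x c * ec c c')) by (apply functional_extensionality; intros c'; unfold y, ec; destruct (Ieq c' c); subst; ring).
    destruct (Rlt_le_dec 0 (x c)) as [Hp|Hn].
    + assert (Up ((phi x - sumL l g y) / x c)).
      { exists y, (x c). split; auto. split; auto. rewrite <- Ex. auto. }
      assert (a <= (phi x - sumL l g y) / x c) by (apply Hlub; intros z Hz; apply Key; auto).
      apply Rmult_le_compat_r with (r := x c) in H0; [|lra].
      replace ((phi x - sumL l g y) / x c * x c) with (phi x - sumL l g y) in H0 by (field; lra). lra.
    + destruct (Rle_lt_or_eq_dec _ _ Hn) as [Hneg|Hz].
      * assert (Lo ((sumL l g y - phi x) / (- x c))).
        { exists y, (- x c). split; [lra|]. split; auto.
          replace (fun c' => y c' - - x c * ec c c') with x. split; auto.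
          rewrite Ex at 1. apply functional_extensionality; intros; ring. }
        assert ((sumL l g y - phi x) / (- x c) <= a) by (apply Hub; auto).
        apply Rmult_le_compat_r with (r := - x c) in H0; [|lra].
        replace ((sumL l g y - phi x) / - x c * - x c) with (sumL l g y - phi x) in H0 by (field; lra). lra.
      * rewrite Hz. assert (x = y). { rewrite Ex at 1. apply functional_extensionality; intros; rewrite Hz; ring. }
        assert (phi x = phi y) by (rewrite <- H; auto). rewrite H in Dx. specialize (Hl y Dx Sy). lra.
  - exists 0. intros x Dx Sx.
    destruct (decomp x Sx) as [Sy Ex].
    set (y := fun c' => if Ieq c' c then 0 else x c') in *.
    rewrite <- (sumy x). fold y. clear Ex.
    assert (Ex : x = (fun c' => y c' + x c * ec c c')) by (apply functional_extensionality; intros c'; unfold y, ec; destruct (Ieq c' c); subst; ring).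
    destruct (Req_dec (x c) 0) as [Hz|Hnz].
    + assert (x = y). { rewrite Ex at 1. apply functional_extensionality; intros; rewrite Hz; ring. }
      assert (phi x = phi y) by (rewrite <- H; auto). rewrite H in Dx. specialize (Hl y Dx Sy). lra.
    + exfalso. destruct (Rlt_le_dec 0 (x c)) as [Hp|Hn].
      * destruct (Dsym x Dx) as [r [Hr Dr]]. apply HnoLo.
        exists ((sumL l g (fun c' => - r * y c') - phi (fun c' => - r * x c')) / (r * x c)).
        exists (fun c' => - r * y c'), (r * x c). split; [nra|]. split.
        { intros c' Hc'. rewrite Sy; auto; ring. }
        replace (fun c' => - r * y c' - r * x c * ec c c') with (fun c' => - r * x c').
        split; auto. apply functional_extensionality; intros c'; unfold y, ec; destruct (Ieq c' c); subst; ring.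
      * apply HnoLo. exists ((sumL l g y - phi x) / (- x c)). exists y, (- x c). split; [lra|]. split; auto.
        replace (fun c' => y c' - - x c * ec c c') with x. split; auto.
        apply functional_extensionality; intros c'; unfold y, ec; destruct (Ieq c' c); subst; ring.
Qed.

Lemma HB_iter : forall l1 l0 g, NoDup (l1 ++ l0) ->
  (forall x, D x -> suppL l0 x -> sumL l0 g x <= phi x) ->
  exists g', (forall c, In c l0 -> g' c = g c) /\
    forall x, D x -> suppL (l1 ++ l0) x -> sumL (l1 ++ l0) g' x <= phi x.
Proof.
  induction l1; intros l0 g ND H.
  - exists g. split; auto.
  - simpl in ND. inversion ND as [|? ? Hnin ND']. subst.
    destruct (IHl1 l0 g ND' H) as [g1 [Hg1 H1]]. simpl.
    + destruct (HB_step (l1 ++ l0) a g1 Hnin H1) as [al Hal].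
      exists (fun c => if Ieq c a then al else g1 c). split.
      * intros c Hc. destruct (Ieq c a). subst. exfalso; apply Hnin; apply in_or_app; auto. auto.
      * intros x Dx Sx. simpl. destruct (Ieq a a); [|tauto].
        rewrite (sumL_ext_g _ _ g1). apply Hal; auto.
        intros c Hc. destruct (Ieq c a); auto. subst; tauto.
Qed.
End HB.

Definition cvg (u : nat -> R) (l : R) := forall eps, 0 < eps -> exists N, forall n, (N <= n)%nat -> Rabs (u n - l) < eps.

Lemma incr_ge (phi : nat -> nat) : (forall N, (phi N < phi (S N))%nat) -> forall N, (N <= phi N)%nat.
Proof. intros H N. induction N; [lia|]. specialize (H N). lia. Qed.

Lemma incr_mono (phi : nat -> nat) : (forall N, (phi N < phi (S N))%nat) -> forall a b, (a <= b)%nat -> (phi a <= phi b)%nat.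
Proof. intros H a b Hab. induction Hab; auto. specialize (H m). lia. Qed.

Lemma cvg_sub u l phi : (forall N, (phi N < phi (S N))%nat) -> cvg u l -> cvg (fun n => u (phi n)) l.
Proof.
  intros Hp Hc eps He. destruct (Hc eps He) as [N HN]. exists N. intros n Hn.
  apply HN. pose proof (incr_ge phi Hp n). lia.
Qed.

Lemma BW1 (y : nat -> R) : (forall N, -1 <= y N <= 1) ->
  exists phi : nat -> nat, (forall N, (phi N < phi (S N))%nat) /\ exists l, cvg (fun N => y (phi N)) l.
Proof.
  intros Hb. destruct (Bolzano_Weierstrass y (fun c => -1 <= c <= 1) (compact_P3 (-1) 1) Hb) as [l Hl].
  assert (H : forall N K, exists p, (K <= p)%nat /\ Rabs (y p - l) < / INR (S N)).
  { intros N K. assert (Hpos : 0 < / INR (S N)) by (apply Rinv_0_lt_compat; apply lt_0_INR; lia).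
    assert (Hn : neighbourhood (disc l (mkposreal _ Hpos)) l) by (exists (mkposreal _ Hpos); intros z Hz; exact Hz).
    destruct (Hl (disc l (mkposreal _ Hpos)) K Hn) as [p [Hp Hv]].
    exists p. split; auto. }
  assert (sel : forall N K, {p | (K <= p)%nat /\ Rabs (y p - l) < / INR (S N)}).
  { intros N K. apply constructive_indefinite_description. apply H. }
  set (f := fix f n := match n with O => proj1_sig (sel O O) | S n' => proj1_sig (sel (S n') (S (f n'))) end).
  exists f. split.
  - intros N. change (f (S N)) with (proj1_sig (sel (S N) (S (f N)))).
    destruct (proj2_sig (sel (S N) (S (f N)))) as [Hp _]. lia.
  - exists l. intros eps He.
    destruct (archimed (/ eps)) as [Ha _].
    assert (Hz : (0 <= up (/ eps))%Z). { apply le_IZR. assert (0 < / eps) by (apply Rinv_0_lt_compat; lra). lra. }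
    exists (Z.to_nat (up (/ eps))). intros n Hn.
    assert (Hf : Rabs (y (f n) - l) < / INR (S n)).
    { destruct n. change (f O) with (proj1_sig (sel O O)). apply (proj2_sig (sel O O)).
      change (f (S n)) with (proj1_sig (sel (S n) (S (f n)))). apply (proj2_sig (sel (S n) (S (f n)))). }
    eapply Rlt_le_trans; [exact Hf|].
    assert (INR (Z.to_nat (up (/ eps))) = IZR (up (/ eps))) by (rewrite INR_IZR_INZ, Z2Nat.id; auto).
    assert (INR (Z.to_nat (up (/ eps))) <= INR n) by (apply le_INR; auto).
    rewrite S_INR.
    apply Rle_trans with (/ (/ eps)). apply Rinv_le_contravar. apply Rinv_0_lt_compat; lra. lra.
    rewrite Rinv_inv. lra.
Qed.

Definition upd (L : nat -> R) (m : nat) (v : R) := fun j => if Nat.eq_dec j m then v else L j.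

Lemma BWm : forall m (x : nat -> nat -> R), (forall N j, (j < m)%nat -> -1 <= x N j <= 1) ->
  exists phi : nat -> nat, (forall N, (phi N < phi (S N))%nat) /\
    exists L, forall j, (j < m)%nat -> cvg (fun N => x (phi N) j) (L j).
Proof.
  induction m; intros x Hb.
  - exists (fun N => N). split; [intros; lia|]. exists (fun _ => 0). intros; lia.
  - destruct (IHm x (fun N j Hj => Hb N j ltac:(lia))) as [phi [Hphi [L HL]]].
    destruct (BW1 (fun N => x (phi N) m) (fun N => Hb (phi N) m ltac:(lia))) as [ps [Hps [l Hl]]].
    exists (fun N => phi (ps N)). split.
    + intros N. specialize (Hps N). pose proof (incr_mono phi Hphi (S (ps N)) (ps (S N)) ltac:(lia)). specialize (Hphi (ps N)). lia.
    + exists (upd L m l). intros j Hj. unfold upd. destruct (Nat.eq_dec j m).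
      * subst. exact Hl.
      * apply (cvg_sub (fun N => x (phi N) j)); auto. apply HL. lia.
Qed.

Lemma cvg_all : forall m (u : nat -> nat -> R) L, (forall j, (j < m)%nat -> cvg (fun N => u N j) (L j)) ->
  forall eps, 0 < eps -> exists N0, forall N, (N0 <= N)%nat -> forall j, (j < m)%nat -> Rabs (u N j - L j) < eps.
Proof.
  induction m; intros u L H eps He.
  - exists O. intros; lia.
  - destruct (IHm u L (fun j Hj => H j ltac:(lia)) eps He) as [N1 H1].
    destruct (H m ltac:(lia) eps He) as [N2 H2].
    exists (max N1 N2). intros N HN j Hj. destruct (Nat.eq_dec j m).
    + subst. apply H2. lia.
    + apply H1; lia.
Qed.

Lemma BW_adh : forall m (x : nat -> nat -> R), (forall N j, (j < m)%nat -> -1 <= x N j <= 1) ->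
  exists L, forall eps, 0 < eps -> forall N0, exists N, (N0 <= N)%nat /\ forall j, (j < m)%nat -> Rabs (x N j - L j) < eps.
Proof.
  intros m x Hb. destruct (BWm m x Hb) as [phi [Hphi [L HL]]]. exists L. intros eps He N0.
  destruct (cvg_all m (fun N j => x (phi N) j) L HL eps He) as [N1 H1].
  exists (phi (max N0 N1)). split.
  - pose proof (incr_ge phi Hphi (max N0 N1)). lia.
  - apply H1. lia.
Qed.

Lemma Rdiv_le_0_compat a b : 0 <= a -> 0 < b -> 0 <= a / b.
Proof. intros. unfold Rdiv. apply Rmult_le_pos; auto. left; apply Rinv_0_lt_compat; auto. Qed.

Lemma rsum_const m c : rsum m (fun _ => c) = INR m * c.
Proof. induction m; simpl rsum; [simpl; ring|]. rewrite IHm, S_INR. ring. Qed.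

Lemma rsum_nonneg_zero m f : (forall i, (i < m)%nat -> 0 <= f i) -> rsum m f = 0 -> forall i, (i < m)%nat -> f i = 0.
Proof.
  induction m; intros H Hs i Hi; [lia|]. simpl in Hs.
  assert (0 <= rsum m f) by (apply rsum_nonneg; intros; apply H; lia).
  assert (0 <= f m) by (apply H; lia).
  destruct (Nat.eq_dec i m). subst; lra. apply IHm; [intros; apply H; lia|lra|lia].
Qed.

Section Conv.
Variable d : nat.
Variable C : (nat -> R) -> Prop.
Hypothesis HC : convex_set d C.

Lemma conv2 u v lam : C u -> C v -> 0 <= lam <= 1 -> C (fun j => lam * u j + (1 - lam) * v j).
Proof. intros. apply (proj2 HC); auto. Qed.

Lemma conv_comb : forall N U mu, (forall k, (k < N)%nat -> C (U k)) -> (forall k, (k < N)%nat -> 0 <= mu k) ->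
  rsum N mu = 1 -> C (fun j => rsum N (fun k => mu k * U k j)).
Proof.
  induction N; intros U mu HU Hmu Hs; simpl in Hs; [lra|].
  assert (Hm : 0 <= rsum N mu) by (apply rsum_nonneg; intros; apply Hmu; lia).
  destruct (Req_dec (mu N) 1) as [E|E].
  - assert (Z : forall k, (k < N)%nat -> mu k = 0) by (apply rsum_nonneg_zero; [intros; apply Hmu; lia|lra]).
    replace (fun j => rsum (S N) (fun k => mu k * U k j)) with (U N). apply HU; lia.
    apply functional_extensionality; intros j. simpl. rewrite rsum_zero. rewrite E; ring.
    intros k Hk. rewrite Z by auto. ring.
  - set (Sm := rsum N mu).
    assert (HS : 0 < Sm). { unfold Sm. destruct (Rle_lt_dec 1 (mu N)); [exfalso; apply E; lra|lra]. }
    assert (HV : C (fun j => rsum N (fun k => (mu k / Sm) * U k j))).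
    { apply IHN. intros; apply HU; lia. intros k Hk. apply Rdiv_le_0_compat. apply Hmu; lia. auto.
      unfold Rdiv. rewrite rsum_scal_r. fold Sm. field. lra. }
    assert (Hc := conv2 _ _ Sm HV (HU N ltac:(lia)) ltac:(pose proof (Hmu N ltac:(lia)); unfold Sm; split; lra)).
    replace (fun j => rsum (S N) (fun k => mu k * U k j)) with
       (fun j => Sm * rsum N (fun k => mu k / Sm * U k j) + (1 - Sm) * U N j); auto.
    apply functional_extensionality; intros j. simpl. rewrite <- rsum_scal.
    rewrite (rsum_ext N _ (fun k => mu k * U k j)) by (intros; field; lra).
    replace (1 - Sm) with (mu N) by (unfold Sm; lra). ring.
Qed.

Definition affind (N : nat) (U : nat -> nat -> R) :=
  forall lam, rsum N lam = 0 -> (forall j, rsum N (fun k => lam k * U k j) = 0) -> forall k, (k < N)%nat -> lam k = 0.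

Lemma family_bound N U : (forall k, (k < N)%nat -> C (U k)) -> affind N U -> (N <= S d)%nat.
Proof.
  intros HU HA. destruct (Compare_dec.le_lt_dec N (S d)) as [H|H]; auto. exfalso.
  set (a := fun i k => match i with O => 1 | S i' => U k i' end).
  destruct (LA N (S d) a H) as [lam [[k0 [Hk0 Hnz]] Hrows]].
  apply Hnz. apply HA; auto.
  - specialize (Hrows O ltac:(lia)). simpl in Hrows. rewrite <- Hrows. apply rsum_ext; intros; unfold a; ring.
  - intros j. destruct (Compare_dec.lt_dec j d).
    + specialize (Hrows (S j) ltac:(lia)). rewrite <- Hrows. apply rsum_ext; intros; unfold a; ring.
    + apply rsum_zero. intros k Hk. rewrite (proj1 HC (U k) (HU k Hk) j) by lia. ring.
Qed.

Lemma max_family : (exists u, C u) -> exists N U, (1 <= N)%nat /\ (forall k, (k < N)%nat -> C (U k)) /\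
  forall u, C u -> exists nu, rsum N nu = 1 /\ forall j, u j = rsum N (fun k => nu k * U k j).
Proof.
  intros [u0 Hu0].
  set (P := fun N => exists U, (forall k, (k < N)%nat -> C (U k)) /\ affind N U).
  assert (P1 : P 1%nat).
  { exists (fun _ => u0). split. intros; auto. intros lam Hs _ k Hk. simpl in Hs. assert (k = O) by lia. subst. lra. }
  assert (Hex : exists N, (1 <= N)%nat /\ P N /\ ~ P (S N)).
  { apply NNPP. intro Hn.
    assert (forall j, P (S j)). { induction j; auto. apply NNPP. intro Hn2. apply Hn. exists (S j). split; [lia|]. auto. }
    destruct (H (S d)) as [U [HU HA]]. pose proof (family_bound _ U HU HA). lia. }
  destruct Hex as [N [HN [[U [HU HA]] HnP]]].
  exists N, U. split; auto. split; auto.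
  intros u Hu. apply NNPP. intro Hrep. apply HnP.
  exists (fun k => if Nat.eq_dec k N then u else U k). split.
  - intros k Hk. destruct (Nat.eq_dec k N); auto. apply HU; lia.
  - intros lam Hs Heq k Hk.
    assert (HlN : lam N = 0).
    { apply NNPP. intro HlN. apply Hrep. exists (fun k => - lam k / lam N). split.
      - simpl in Hs. unfold Rdiv. rewrite (rsum_ext N _ (fun k => lam k * (- / lam N))) by (intros; ring).
        rewrite rsum_scal_r. field_simplify; auto. replace (rsum N lam) with (- lam N) by lra. field; auto.
      - intros j. specialize (Heq j). simpl in Heq. destruct (Nat.eq_dec N N); [|lia].
        rewrite (rsum_ext N (fun k => lam k * (if Nat.eq_dec k N then u else U k) j) (fun k => lam k * U k j)) in Heq
          by (intros k' Hk'; destruct (Nat.eq_dec k' N); [lia|auto]).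
        rewrite (rsum_ext N _ (fun k => lam k * U k j * (- / lam N))) by (intros; unfold Rdiv; ring).
        rewrite rsum_scal_r. replace (rsum N (fun k => lam k * U k j)) with (- (lam N * u j)) by lra. field; auto. }
    destruct (Nat.eq_dec k N). subst; auto.
    apply HA; try lia.
    + simpl in Hs. lra.
    + intros j. specialize (Heq j). simpl in Heq. rewrite HlN in Heq.
      rewrite <- (rsum_ext N (fun k => lam k * (if Nat.eq_dec k N then u else U k) j)). lra.
      intros k' Hk'; destruct (Nat.eq_dec k' N); [lia|auto].
Qed.

Definition RI (u0 : nat -> R) := C u0 /\ forall u, C u -> exists r, 0 < r /\ C (fun j => u0 j - r * (u j - u0 j)).

Lemma RI_down u0 u r r' : C u0 -> C (fun j => u0 j - r * (u j - u0 j)) -> 0 < r -> 0 <= r' <= r ->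
  C (fun j => u0 j - r' * (u j - u0 j)).
Proof.
  intros H0 H1 Hr Hr'. pose proof (conv2 _ _ (r' / r) H1 H0) as H.
  replace (fun j => u0 j - r' * (u j - u0 j)) with
    (fun j => r' / r * (u0 j - r * (u j - u0 j)) + (1 - r' / r) * u0 j).
  apply H. split. apply Rdiv_le_0_compat; lra. apply Rmult_le_reg_r with r; auto. field_simplify; lra.
  apply functional_extensionality; intros; field; lra.
Qed.

Lemma RI_bary N U : (1 <= N)%nat -> (forall k, (k < N)%nat -> C (U k)) ->
  (forall u, C u -> exists nu, rsum N nu = 1 /\ forall j, u j = rsum N (fun k => nu k * U k j)) ->
  RI (fun j => rsum N (fun k => / INR N * U k j)).
Proof.
  intros HN HU Hrep.
  assert (HNp : 0 < INR N) by (apply lt_0_INR; lia).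
  split.
  - apply conv_comb; auto. intros; left; apply Rinv_0_lt_compat; auto.
    rewrite rsum_const. field. lra.
  - intros u Hu. destruct (Hrep u Hu) as [nu [Hnu Hu']].
    set (Sm := rsum N (fun k => Rabs (nu k))).
    assert (HS : 0 <= Sm) by (apply rsum_nonneg; intros; apply Rabs_pos).
    set (r := / (INR N * (1 + Sm))).
    assert (Hr : 0 < r) by (unfold r; apply Rinv_0_lt_compat; nra).
    exists r. split; auto.
    replace (fun j => rsum N (fun k => / INR N * U k j) - r * (u j - rsum N (fun k => / INR N * U k j)))
      with (fun j => rsum N (fun k => ((1 + r) / INR N - r * nu k) * U k j)).
    + apply conv_comb; auto.
      * intros k Hk. assert (Rabs (nu k) <= Sm).
        { unfold Sm. clear -Hk. induction N; [lia|]. simpl. destruct (Nat.eq_dec k N).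
          subst. assert (0 <= rsum N (fun k => Rabs (nu k))) by (apply rsum_nonneg; intros; apply Rabs_pos). lra.
          assert (Rabs (nu k) <= rsum N (fun k => Rabs (nu k))) by (apply IHN; lia). pose proof (Rabs_pos (nu N)). lra. }
        assert (r * nu k <= r * Sm). { apply Rmult_le_compat_l. lra. pose proof (Rle_abs (nu k)). lra. }
        assert (r * Sm * INR N < 1). { unfold r. replace (/ (INR N * (1 + Sm)) * Sm * INR N) with (Sm / (1 + Sm)) by (field; lra).
          apply Rmult_lt_reg_r with (1 + Sm). lra. field_simplify; lra. }
        assert (r * Sm <= / INR N). { apply Rmult_le_reg_r with (INR N); auto. rewrite Rinv_l; lra. }
        assert (/ INR N <= (1 + r) / INR N). { unfold Rdiv. rewrite Rmult_plus_distr_r. assert (0 < r / INR N) by (apply Rdiv_lt_0_compat; auto). unfold Rdiv in H3. lra. }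
        lra.
      * rewrite rsum_minus, rsum_const, rsum_scal, Hnu. field. lra.
    + apply functional_extensionality; intros j. rewrite (Hu' j).
      rewrite (rsum_ext N _ (fun k => (1 + r) * (/ INR N * U k j) - r * (nu k * U k j))) by (intros; unfold Rdiv; ring).
      rewrite rsum_minus, !rsum_scal. ring.
Qed.

Lemma RI_mix b u1 s : RI b -> C u1 -> 0 < s <= 1 -> RI (fun j => s * b j + (1 - s) * u1 j).
Proof.
  intros [Hb HRb] Hu1 Hs. split.
  - apply conv2; auto; lra.
  - intros u Hu. destruct (HRb u Hu) as [rb [Hrb HCb]].
    set (r' := Rmin (rb / 2) (1 / 2)).
    assert (Hr'1 : r' <= rb / 2) by apply Rmin_l. assert (Hr'2 : r' <= 1/2) by apply Rmin_r.
    assert (Hr'p : 0 < r') by (unfold r'; apply Rmin_pos; lra).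
    assert (P1 : C (fun j => b j - (2 * r') * (u j - b j))) by (apply (RI_down b u rb); auto; lra).
    assert (P2 : C (fun j => (2 * r' * (1 - s)) * u1 j + (1 - (2 * r' * (1 - s))) * b j)) by (apply conv2; auto; nra).
    assert (Q := conv2 _ _ (1/2) P1 P2 ltac:(lra)).
    assert (T := conv2 _ _ s Q Hu1 ltac:(lra)).
    exists (s * r'). split; [nra|].
    replace (fun j => s * b j + (1 - s) * u1 j - s * r' * (u j - (s * b j + (1 - s) * u1 j))) with
      (fun j => s * (1 / 2 * (b j - 2 * r' * (u j - b j)) + (1 - 1 / 2) * (2 * r' * (1 - s) * u1 j + (1 - 2 * r' * (1 - s)) * b j)) + (1 - s) * u1 j); auto.
    apply functional_extensionality; intros j. field.
Qed.

End Conv.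

Definition peq : forall a b : nat * nat, {a = b} + {a <> b}.
Proof. decide equality; apply Nat.eq_dec. Defined.

Lemma finite_min : forall n (P : nat -> R -> Prop),
  (forall i, (i < n)%nat -> exists r, 0 < r /\ P i r) ->
  (forall i r r', (i < n)%nat -> P i r -> 0 < r' <= r -> P i r') ->
  exists r, 0 < r /\ forall i, (i < n)%nat -> P i r.
Proof.
  induction n; intros P H Hd.
  - exists 1. split; [lra|intros; lia].
  - destruct (IHn P (fun i Hi => H i ltac:(lia)) (fun i r r' Hi => Hd i r r' ltac:(lia))) as [r1 [Hr1 H1]].
    destruct (H n ltac:(lia)) as [r2 [Hr2 H2]].
    exists (Rmin r1 r2). split. apply Rmin_pos; auto.
    intros i Hi. destruct (Nat.eq_dec i n).
    + subst. apply (Hd n r2); auto. split. apply Rmin_pos; auto. apply Rmin_r.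
    + apply (Hd i r1); auto. apply H1; lia. split. apply Rmin_pos; auto. apply Rmin_l.
Qed.

Lemma NoDup_map_inj {A B} (f : A -> B) l : (forall a b, f a = f b -> a = b) -> NoDup l -> NoDup (map f l).
Proof.
  intros Hf Hl. induction Hl; simpl; constructor; auto.
  intro Hin. apply in_map_iff in Hin. destruct Hin as [y [E Hy]]. apply Hf in E. subst. auto.
Qed.

Lemma NoDup_prod (la lb : list nat) : NoDup la -> NoDup lb -> NoDup (list_prod la lb).
Proof.
  intros Ha Hb. induction Ha; simpl; [constructor|].
  apply NoDup_app; auto.
  - apply NoDup_map_inj; auto. intros a b E. inversion E; auto.
  - intros c Hc1 Hc2. apply in_map_iff in Hc1. destruct Hc1 as [y [E _]]. subst c.
    apply in_prod_iff in Hc2. tauto.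
Qed.

Lemma sumL_zero_x {I} l (g x : I -> R) : (forall c, In c l -> x c = 0) -> sumL I l g x = 0.
Proof. induction l; simpl; intros H; auto. rewrite H by auto. rewrite IHl by auto. ring. Qed.

Lemma sumL_zero_g {I} l (g x : I -> R) : (forall c, In c l -> g c = 0) -> sumL I l g x = 0.
Proof. induction l; simpl; intros H; auto. rewrite H by auto. rewrite IHl by auto. ring. Qed.

Lemma sumL_seq {I} (f : nat -> I) s len g x :
  sumL I (map f (seq s len)) g x = rsum len (fun i => g (f (s + i)%nat) * x (f (s + i)%nat)).
Proof.
  revert s. induction len; intros s; [simpl; lra|].
  change (sumL I (map f (seq s (S len))) g x) with (g (f s) * x (f s) + sumL I (map f (seq (S s) len)) g x).
  rewrite IHlen. rewrite (rsum_first len (fun i => g (f (s + i)%nat) * x (f (s + i)%nat))).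
  rewrite Nat.add_0_r. f_equal. apply rsum_ext. intros i Hi. replace (S s + i)%nat with (s + S i)%nat by lia. reflexivity.
Qed.

Lemma sumL_prod_seq s1 len1 lb g x :
  sumL (nat * nat) (list_prod (seq s1 len1) lb) g x = rsum len1 (fun i => sumL (nat*nat) (map (fun y => ((s1 + i)%nat, y)) lb) g x).
Proof.
  revert s1. induction len1; intros s1; [simpl; lra|].
  change (list_prod (seq s1 (S len1)) lb) with (map (fun y => (s1, y)) lb ++ list_prod (seq (S s1) len1) lb).
  rewrite sumL_app, IHlen1. rewrite (rsum_first len1). rewrite Nat.add_0_r. f_equal.
  apply rsum_ext. intros i Hi. replace (S s1 + i)%nat with (s1 + S i)%nat by lia. auto.
Qed.

Definition HxF (d : nat) (u0 : nat -> R) (x : nat * nat -> R) (i : nat) : nat -> R :=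
  fun k' => u0 k' + (if Compare_dec.lt_dec k' d then x (0%nat, k') + (if Nat.eq_dec i 0 then 0 else x (i, k')) else 0).

Lemma coupled (n d : nat) (C : (nat -> R) -> Prop) (psi : (nat -> R) -> nat -> R) (p u0 : nat -> R) (eta : R) :
  (1 <= n)%nat -> convex_set d C -> convex_surrogate n C psi -> (forall i, (i < n)%nat -> 0 < p i) -> RI C u0 ->
  (forall u, C u -> dot n p (psi u0) <= dot n p (psi u) + eta) ->
  exists gam : nat -> nat -> R, (forall k', rsum n (fun a => gam a k') = 0) /\
    forall a u, (a < n)%nat -> C u -> rsum d (fun k' => gam a k' * (u k' - u0 k')) <= p a * (psi u a - psi u0 a) + eta.
Proof.
  intros Hn HC Hcv Hp HRI Hopt.
  assert (Cu0 : C u0) by apply HRI.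
  assert (u0z : forall k', (d <= k')%nat -> u0 k' = 0) by (intros; apply (proj1 HC u0 Cu0); auto).
  set (l0 := list_prod (0%nat :: nil) (seq 0 d)).
  set (l1 := list_prod (seq 1 (n - 1)) (seq 0 d)).
  assert (Hin : forall a k', In (a, k') (l1 ++ l0) <-> (a < n)%nat /\ (k' < d)%nat).
  { intros a k'. unfold l1, l0. rewrite in_app_iff, !in_prod_iff, !in_seq. simpl. lia. }
  assert (Hin0 : forall a k', In (a, k') l0 <-> a = 0%nat /\ (k' < d)%nat).
  { intros a k'. unfold l0. rewrite in_prod_iff, in_seq. simpl. lia. }
  set (D := fun x => suppL (nat*nat) (l1 ++ l0) x /\ forall i, (i < n)%nat -> C (HxF d u0 x i)).
  set (phi := fun x => rsum n (fun i => p i * (psi (HxF d u0 x i) i - psi u0 i)) + eta).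
  assert (Hmix : forall x y lam i, HxF d u0 (fun c => lam * x c + (1 - lam) * y c) i =
                   (fun k' => lam * HxF d u0 x i k' + (1 - lam) * HxF d u0 y i k')).
  { intros. apply functional_extensionality; intros k'. unfold HxF.
    destruct (Compare_dec.lt_dec k' d); destruct (Nat.eq_dec i 0); ring. }
  assert (Dconv : forall x y lam, D x -> D y -> 0 <= lam <= 1 -> D (fun c => lam * x c + (1 - lam) * y c)).
  { intros x y lam [Sx Cx] [Sy Cy] Hl. split.
    - intros c Hc. rewrite Sx, Sy by auto. ring.
    - intros i Hi. rewrite Hmix. apply conv2 with d; auto. }
  assert (Dsym : forall x, D x -> exists r, 0 < r /\ D (fun c => - r * x c)).
  { intros x [Sx Cx].
    destruct (finite_min n (fun i r => C (fun j => u0 j - r * (HxF d u0 x i j - u0 j)))) as [r [Hr Hall]].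
    - intros i Hi. destruct (proj2 HRI _ (Cx i Hi)) as [r [Hr Hc]]. exists r; auto.
    - intros i r r' Hi H1 H2. apply (RI_down d C HC u0 (HxF d u0 x i) r r'); auto; lra.
    - exists r. split; auto. split.
      + intros c Hc. rewrite Sx by auto. ring.
      + intros i Hi. replace (HxF d u0 (fun c => - r * x c) i) with (fun j => u0 j - r * (HxF d u0 x i j - u0 j)).
        apply Hall; auto.
        apply functional_extensionality; intros k'. unfold HxF.
        destruct (Compare_dec.lt_dec k' d); destruct (Nat.eq_dec i 0); ring. }
  assert (phiconv : forall x y lam, D x -> D y -> 0 <= lam <= 1 ->
     phi (fun c => lam * x c + (1 - lam) * y c) <= lam * phi x + (1 - lam) * phi y).
  { intros x y lam [Sx Cx] [Sy Cy] Hl. unfold phi.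
    assert (rsum n (fun i => p i * (psi (HxF d u0 (fun c => lam * x c + (1 - lam) * y c) i) i - psi u0 i)) <=
            rsum n (fun i => lam * (p i * (psi (HxF d u0 x i) i - psi u0 i)) + (1 - lam) * (p i * (psi (HxF d u0 y i) i - psi u0 i)))).
    { apply rsum_le. intros i Hi. rewrite Hmix.
      pose proof (Hcv i (HxF d u0 x i) (HxF d u0 y i) lam Hi (Cx i Hi) (Cy i Hi) Hl).
      pose proof (Hp i Hi). nra. }
    rewrite rsum_plus, !rsum_scal in H. lra. }
  assert (Init : forall x, D x -> suppL (nat*nat) l0 x -> sumL (nat*nat) l0 (fun _ => 0) x <= phi x).
  { intros x [Sx Cx] S0. rewrite sumL_zero_g by auto.
    assert (E : forall i, (i < n)%nat -> HxF d u0 x i = HxF d u0 x 0).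
    { intros i Hi. apply functional_extensionality; intros k'. unfold HxF.
      destruct (Compare_dec.lt_dec k' d); destruct (Nat.eq_dec i 0); destruct (Nat.eq_dec 0 0); try lia; try ring.
      rewrite (S0 (i, k')). ring. rewrite Hin0. lia. }
    unfold phi. rewrite (rsum_ext n _ (fun i => p i * psi (HxF d u0 x 0) i - p i * psi u0 i)) by (intros i Hi; rewrite E; auto; ring).
    rewrite rsum_minus. specialize (Hopt _ (Cx 0%nat ltac:(lia))). unfold dot in Hopt. lra. }
  assert (ND : NoDup (l1 ++ l0)).
  { apply NoDup_app. apply NoDup_prod; apply seq_NoDup. apply NoDup_prod. constructor. simpl; tauto. constructor. apply seq_NoDup.
    intros [a k'] H1 H2. unfold l1, l0 in *. apply in_prod_iff in H1. apply in_prod_iff in H2. rewrite in_seq in H1. simpl in H2. lia. }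
  destruct (HB_iter (nat*nat) peq D phi Dconv Dsym phiconv l1 l0 (fun _ => 0) ND Init) as [g [Hg0 Hg]].
  exists (fun a k' => if Nat.eq_dec a 0 then - rsum (n - 1) (fun b => g (S b, k')) else g (a, k')).
  split.
  - intros k'. clear -Hn. destruct n as [|n']; [lia|]. rewrite rsum_first. simpl. rewrite Nat.sub_0_r.
    ring.
  - intros a u Ha Cu.
    assert (uz : forall k', (d <= k')%nat -> u k' = 0) by (intros; apply (proj1 HC u Cu); auto).
    set (h := fun k' => u k' - u0 k').
    assert (Hsum1 : forall x, sumL (nat*nat) l1 g x = rsum (n - 1) (fun b => rsum d (fun k' => g (S b, k') * x (S b, k')))).
    { intros x. unfold l1. rewrite sumL_prod_seq. apply rsum_ext. intros b Hb. rewrite sumL_seq. apply rsum_ext. intros; simpl; auto. }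
    assert (Hsum0 : forall x, sumL (nat*nat) l0 g x = 0).
    { intros x. apply sumL_zero_g. intros [b k'] Hc. rewrite Hg0; auto. }
    destruct (Nat.eq_dec a 0) as [Ea|Ea].
    + subst a.
      set (x0 := fun c : nat * nat => if Compare_dec.lt_dec (snd c) d then
                   (if Nat.eq_dec (fst c) 0 then h (snd c) else if Compare_dec.lt_dec (fst c) n then - h (snd c) else 0) else 0).
      assert (Hx0 : HxF d u0 x0 0 = u).
      { apply functional_extensionality; intros k'. unfold HxF, x0, h; simpl.
        destruct (Compare_dec.lt_dec k' d); destruct (Nat.eq_dec 0 0); try lia. ring. rewrite uz, u0z by lia. ring. }
      assert (Hxi : forall i, (1 <= i < n)%nat -> HxF d u0 x0 i = u0).
      { intros i Hi. apply functional_extensionality; intros k'. unfold HxF, x0, h; simpl.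
        destruct (Compare_dec.lt_dec k' d); destruct (Nat.eq_dec i 0); try lia; try ring.
        destruct (Compare_dec.lt_dec i n); try lia. ring. }
      assert (Dx0 : D x0).
      { split.
        - intros [b k'] Hc. rewrite Hin in Hc. unfold x0; simpl.
          destruct (Compare_dec.lt_dec k' d); auto. destruct (Nat.eq_dec b 0). lia. destruct (Compare_dec.lt_dec b n); auto; lia.
        - intros i Hi. destruct (Nat.eq_dec i 0) as [->|]. rewrite Hx0; auto. rewrite Hxi; auto; lia. }
      specialize (Hg x0 Dx0 (proj1 Dx0)).
      rewrite sumL_app, Hsum1, Hsum0 in Hg. unfold phi in Hg.
      replace n with (S (n - 1)) in Hg at 2 by lia. rewrite rsum_first in Hg. rewrite Hx0 in Hg.
      rewrite (rsum_zero (n - 1) (fun i => p (S i) * (psi (HxF d u0 x0 (S i)) (S i) - psi u0 (S i)))) in Hg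
        by (intros i Hi; rewrite Hxi by lia; ring).
      destruct (Nat.eq_dec 0 0); [|lia].
      assert (E : rsum d (fun k' => - rsum (n - 1) (fun b => g (S b, k')) * (u k' - u0 k')) =
                  rsum (n - 1) (fun b => rsum d (fun k' => g (S b, k') * x0 (S b, k')))).
      { rewrite (rsum_swap (n - 1) d). apply rsum_ext. intros k' Hk'.
        rewrite (rsum_ext (n - 1) (fun b => g (S b, k') * x0 (S b, k')) (fun b => g (S b, k') * (- (u k' - u0 k')))).
        rewrite rsum_scal_r. ring.
        intros b Hb. unfold x0; simpl. destruct (Compare_dec.lt_dec k' d); [|lia].
        destruct (Nat.eq_dec (S b) 0); [lia|]. destruct (Compare_dec.lt_dec (S b) n); [|lia]. unfold h. ring. }
      lra.
    + set (xa := fun c : nat * nat => if Nat.eq_dec (fst c) a then (if Compare_dec.lt_dec (snd c) d then h (snd c) else 0) else 0).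
      assert (Hxa : HxF d u0 xa a = u).
      { apply functional_extensionality; intros k'. unfold HxF, xa, h; simpl.
        repeat match goal with |- context[if ?c then _ else _] => destruct c end; try lia; try ring.
        rewrite uz, u0z by lia. ring. }
      assert (Hxi : forall i, i <> a -> HxF d u0 xa i = u0).
      { intros i Hi. apply functional_extensionality; intros k'. unfold HxF, xa, h; simpl.
        repeat match goal with |- context[if ?c then _ else _] => destruct c end; try lia; try ring. }
      assert (Dxa : D xa).
      { split.
        - intros [b k'] Hc. rewrite Hin in Hc. unfold xa; simpl.
          destruct (Nat.eq_dec b a); auto. destruct (Compare_dec.lt_dec k' d); auto; lia.
        - intros i Hi. destruct (Nat.eq_dec i a) as [->|]. rewrite Hxa; auto. rewrite Hxi; auto. }
      specialize (Hg xa Dxa (proj1 Dxa)).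
      rewrite sumL_app, Hsum1, Hsum0 in Hg. unfold phi in Hg.
      rewrite (rsum_ext n _ (fun i => if Nat.eq_dec i a then p a * (psi u a - psi u0 a) else 0)) in Hg.
      2:{ intros i Hi. destruct (Nat.eq_dec i a) as [->|]. rewrite Hxa; auto. rewrite Hxi; auto; ring. }
      rewrite rsum_indic in Hg by auto.
      assert (E : rsum (n - 1) (fun b => rsum d (fun k' => g (S b, k') * xa (S b, k'))) = rsum d (fun k' => g (a, k') * h k')).
      { rewrite rsum_swap. apply rsum_ext. intros k' Hk'.
        rewrite (rsum_ext (n - 1) _ (fun b => if Nat.eq_dec b (a - 1) then g (a, k') * h k' else 0)).
        apply rsum_indic; lia.
        intros b Hb. unfold xa; cbn [fst snd]. destruct (Nat.eq_dec (S b) a) as [E1|E1]; destruct (Nat.eq_dec b (a - 1)); try lia.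
        destruct (Compare_dec.lt_dec k' d); [|lia]. rewrite E1; reflexivity. ring. }
      rewrite (rsum_ext d _ (fun k' => g (a, k') * h k')) by (intros; destruct (Nat.eq_dec a 0); [lia|reflexivity]).
      lra.
Qed.

Lemma lsum_nth (l : list nat) f : lsum l f = rsum (length l) (fun j => f (nth j l 0%nat)).
Proof.
  induction l; [simpl; unfold lsum; simpl; lra|].
  change (lsum (a :: l) f) with (f a + lsum l f). rewrite IHl.
  change (length (a :: l)) with (S (length l)).
  rewrite (rsum_first (length l) (fun j => f (nth j (a :: l) 0%nat))). simpl. reflexivity.
Qed.

Lemma dot_lin n p v w tau : dot n (fun i => p i + tau * v i) w = dot n p w + tau * dot n v w.
Proof. unfold dot. rewrite <- rsum_scal, <- rsum_plus. apply rsum_ext; intros; ring. Qed.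

Lemma term_le_rsum n f i : (forall j, (j < n)%nat -> 0 <= f j) -> (i < n)%nat -> f i <= rsum n f.
Proof.
  induction n; intros H Hi; [lia|]. simpl. destruct (Nat.eq_dec i n).
  - subst. assert (0 <= rsum n f) by (apply rsum_nonneg; intros; apply H; lia). lra.
  - assert (f i <= rsum n f) by (apply IHn; [intros; apply H; lia|lia]). pose proof (H n ltac:(lia)). lra.
Qed.

Lemma argmax_abs m f : (1 <= m)%nat -> exists j0, (j0 < m)%nat /\ forall j, (j < m)%nat -> Rabs (f j) <= Rabs (f j0).
Proof.
  induction m; intros H; [lia|]. destruct (Nat.eq_dec m 0).
  - subst. exists O. split; [lia|]. intros j Hj. assert (j = O) by lia. subst; lra.
  - destruct (IHm ltac:(lia)) as [j0 [Hj0 Hmax]].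
    destruct (Rle_lt_dec (Rabs (f m)) (Rabs (f j0))).
    + exists j0. split; [lia|]. intros j Hj. destruct (Nat.eq_dec j m). subst; auto. apply Hmax; lia.
    + exists m. split; [lia|]. intros j Hj. destruct (Nat.eq_dec j m). subst; lra. pose proof (Hmax j ltac:(lia)). lra.
Qed.

Lemma IZR_le_INR_to_nat z : IZR z <= INR (Z.to_nat z).
Proof.
  destruct (Z_lt_le_dec z 0).
  - assert (IZR z < 0) by (apply IZR_lt; auto). destruct z; simpl; try lra; lia.
  - rewrite INR_IZR_INZ, Z2Nat.id by auto. lra.
Qed.

Section Main.
Variables (n k d m : nat) (L : nat -> nat -> R) (p : nat -> R) (c : R) (s : list nat)
  (C : (nat -> R) -> Prop) (psi : (nat -> R) -> nat -> R) (pred : (nat -> R) -> nat).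
Hypothesis Hp : forall i, (i < n)%nat -> 0 < p i.
Hypothesis Hp1 : rsum n p = 1.
Hypothesis Hpc : forall t, (t < k)%nat -> dot n p (col L t) = c.
Hypothesis NDs : NoDup s.
Hypothesis Hsk : forall j, In j s -> (j < k)%nat.
Hypothesis Haff : forall lam : nat -> R, lsum s lam = 0 ->
    (forall i, (i < n)%nat -> lsum s (fun j => lam j * L i j) = 0) -> forall j, In j s -> lam j = 0.
Hypothesis Hlen : length s = S m.
Hypothesis HC : convex_set d C.
Hypothesis Hnn : nonneg_surrogate n C psi.
Hypothesis Hcv : convex_surrogate n C psi.
Hypothesis Hpred : forall u, C u -> (pred u < k)%nat.
Hypothesis Hcal : forall q, in_simplex n q ->
  inf_gt C (fun u => ~ in_argmin n k L q (pred u)) (fun u => dot n q (psi u)).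
Hypothesis Hdm : (d < m)%nat.

Definition s0 := nth 0 s 0%nat.
Definition cs j := nth (S j) s 0%nat.
Definition Dv j i := L i (cs j) - L i s0.
Definition muv j := rsum n (Dv j) / INR n.
Definition xv j i := Dv j i - muv j.
Definition vec (lam : nat -> R) i := rsum m (fun j => lam j * xv j i).

Lemma n_pos : (1 <= n)%nat.
Proof. destruct n; [simpl in Hp1; lra|lia]. Qed.

Lemma xv_sum j : rsum n (xv j) = 0.
Proof.
  unfold xv. rewrite rsum_minus, rsum_const. unfold muv. field.
  apply not_0_INR. pose proof n_pos. lia.
Qed.

Lemma vec_sum lam : rsum n (vec lam) = 0.
Proof.
  unfold vec. rewrite <- rsum_swap. apply rsum_zero. intros j Hj. rewrite rsum_scal, xv_sum. ring.
Qed.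

Lemma s0_in : In s0 s.
Proof. unfold s0. apply nth_In. lia. Qed.

Lemma cs_in j : (j < m)%nat -> In (cs j) s.
Proof. intros. unfold cs. apply nth_In. lia. Qed.

Lemma cs_ne_s0 j : (j < m)%nat -> cs j <> s0.
Proof.
  intros Hj E. unfold cs, s0 in E. apply (NoDup_nth s 0%nat) in E; auto; lia.
Qed.

Lemma cs_inj j j' : (j < m)%nat -> (j' < m)%nat -> cs j = cs j' -> j = j'.
Proof.
  intros Hj Hj' E. unfold cs in E. apply (NoDup_nth s 0%nat) in E; auto; lia.
Qed.

Lemma lsum_s f : lsum s f = f s0 + rsum m (fun j => f (cs j)).
Proof. rewrite lsum_nth, Hlen, rsum_first. reflexivity. Qed.

Lemma inj lam t0 : (t0 < k)%nat ->
  (forall t', (t' < k)%nat -> dot n (vec lam) (col L t') = dot n (vec lam) (col L t0)) ->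
  forall j, (j < m)%nat -> lam j = 0.
Proof.
  intros Ht0 Hv.
  set (v := vec lam) in *.
  assert (H1 : forall j, (j < m)%nat -> rsum n (fun i => v i * Dv j i) = 0).
  { intros j Hj. unfold Dv. rewrite (rsum_ext n _ (fun i => v i * col L (cs j) i - v i * col L s0 i)) by (intros; unfold col; ring).
    rewrite rsum_minus. fold (dot n v (col L (cs j))). fold (dot n v (col L s0)).
    rewrite Hv, (Hv s0). ring. apply Hsk, s0_in. apply Hsk, cs_in; auto. }
  assert (H2 : rsum n v = 0) by apply vec_sum.
  assert (H3 : forall j, (j < m)%nat -> rsum n (fun i => v i * xv j i) = 0).
  { intros j Hj. unfold xv. rewrite (rsum_ext n _ (fun i => v i * Dv j i - v i * muv j)) by (intros; ring).
    rewrite rsum_minus, rsum_scal_r, H1, H2 by auto. ring. }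
  assert (H4 : rsum n (fun i => v i * v i) = 0).
  { rewrite (rsum_ext n _ (fun i => rsum m (fun j => lam j * (v i * xv j i)))).
    rewrite rsum_swap. apply rsum_zero. intros j Hj. rewrite rsum_scal, H3; auto. ring.
    intros i Hi. unfold v at 2, vec. rewrite <- rsum_scal. apply rsum_ext; intros; ring. }
  assert (H5 : forall i, (i < n)%nat -> v i = 0) by (apply rsum_sq_zero; auto).
  set (mu := rsum m (fun j => lam j * muv j)).
  assert (H6 : forall i, (i < n)%nat -> rsum m (fun j => lam j * Dv j i) = mu).
  { intros i Hi. specialize (H5 i Hi). unfold v, vec, xv in H5.
    rewrite (rsum_ext m _ (fun j => lam j * Dv j i - lam j * muv j)) in H5 by (intros; ring).
    rewrite rsum_minus in H5. unfold mu. lra. }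
  assert (H7 : mu = 0).
  { assert (E1 : rsum n (fun i => p i * rsum m (fun j => lam j * Dv j i)) = mu).
    { rewrite (rsum_ext n _ (fun i => p i * mu)) by (intros; rewrite H6; auto). rewrite rsum_scal_r, Hp1. ring. }
    assert (E2 : rsum n (fun i => p i * rsum m (fun j => lam j * Dv j i)) = 0).
    { rewrite (rsum_ext n _ (fun i => rsum m (fun j => lam j * (p i * Dv j i)))) by (intros; rewrite <- rsum_scal; apply rsum_ext; intros; ring).
      rewrite rsum_swap. apply rsum_zero. intros j Hj. rewrite rsum_scal. unfold Dv.
      rewrite (rsum_ext n _ (fun i => p i * col L (cs j) i - p i * col L s0 i)) by (intros; unfold col; ring).
      rewrite rsum_minus. fold (dot n p (col L (cs j))). fold (dot n p (col L s0)).
      rewrite !Hpc. ring. apply Hsk, s0_in. apply Hsk, cs_in; auto. }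
    lra. }
  set (lamc := fun t => (if Nat.eq_dec t s0 then - rsum m lam else 0) + rsum m (fun j => if Nat.eq_dec t (cs j) then lam j else 0)).
  assert (Ls0 : lamc s0 = - rsum m lam).
  { unfold lamc. destruct (Nat.eq_dec s0 s0); [|tauto]. rewrite (rsum_zero m (fun j => if Nat.eq_dec s0 (cs j) then lam j else 0)). ring.
    intros j Hj. destruct (Nat.eq_dec s0 (cs j)). exfalso; apply (cs_ne_s0 j); auto. auto. }
  assert (Lcs : forall j, (j < m)%nat -> lamc (cs j) = lam j).
  { intros j Hj. unfold lamc. destruct (Nat.eq_dec (cs j) s0). exfalso; apply (cs_ne_s0 j); auto.
    rewrite (rsum_ext m _ (fun j' => if Nat.eq_dec j' j then lam j' else 0)). rewrite rsum_indic; auto. ring.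
    intros j' Hj'. destruct (Nat.eq_dec (cs j) (cs j')); destruct (Nat.eq_dec j' j); auto.
    exfalso. apply n1. symmetry. apply cs_inj; auto. subst. tauto. }
  intros j Hj. rewrite <- (Lcs j Hj). apply Haff.
  - rewrite lsum_s, Ls0. rewrite (rsum_ext m (fun j => lamc (cs j)) lam) by auto. ring.
  - intros i Hi. rewrite lsum_s, Ls0. rewrite (rsum_ext m (fun j => lamc (cs j) * L i (cs j)) (fun j => lam j * L i (cs j))) by (intros; rewrite Lcs; auto).
    specialize (H6 i Hi). rewrite H7 in H6. unfold Dv in H6.
    rewrite (rsum_ext m _ (fun j => lam j * L i (cs j) - lam j * L i s0)) in H6 by (intros; ring).
    rewrite rsum_minus, rsum_scal_r in H6. lra.
  - apply cs_in; auto.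
Qed.

Lemma dot_nonneg q u : C u -> (forall i, (i < n)%nat -> 0 <= q i) -> 0 <= dot n q (psi u).
Proof. intros Cu Hq. apply rsum_nonneg. intros i Hi. apply Rmult_le_pos; auto. Qed.

Lemma dot_conv q u v lam : C u -> C v -> 0 <= lam <= 1 -> (forall i, (i < n)%nat -> 0 <= q i) ->
  dot n q (psi (fun j => lam * u j + (1 - lam) * v j)) <= lam * dot n q (psi u) + (1 - lam) * dot n q (psi v).
Proof.
  intros Cu Cv Hl Hq. unfold dot. rewrite <- !rsum_scal, <- rsum_plus. apply rsum_le. intros i Hi.
  pose proof (Hcv i u v lam Hi Cu Cv Hl). pose proof (Hq i Hi). nra.
Qed.

Lemma p_simplex : in_simplex n p.
Proof. split; auto. intros; left; auto. Qed.

Lemma key eta : 0 < eta -> exists u0 lam, C u0 /\ (forall u, C u -> dot n p (psi u0) <= dot n p (psi u) + eta) /\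
  (forall j, (j < m)%nat -> -1 <= lam j <= 1) /\ (exists j, (j < m)%nat /\ Rabs (lam j) = 1) /\
  forall tau u, (forall i, (i < n)%nat -> 0 <= p i + tau * vec lam i) -> C u ->
    dot n (fun i => p i + tau * vec lam i) (psi u0) <= dot n (fun i => p i + tau * vec lam i) (psi u) +
      eta * rsum n (fun i => (p i + tau * vec lam i) / p i).
Proof.
  intros Heta.
  assert (Hne : exists u, C u) by (destruct (Hcal p p_simplex) as [r [_ [u [Cu _]]]]; eauto).
  destruct (max_family d C HC Hne) as [N [U [HN [HU Hrep]]]].
  assert (Hb := RI_bary d C HC N U HN HU Hrep).
  set (b := fun j => rsum N (fun k0 => / INR N * U k0 j)) in *.
  assert (Cb : C b) by apply Hb.
  set (E := fun z => exists u, C u /\ z = - dot n p (psi u)).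
  assert (HEb : bound E).
  { exists 0. intros z [u [Cu ->]]. pose proof (dot_nonneg p u Cu (fun i Hi => Rlt_le _ _ (Hp i Hi))). lra. }
  destruct Hne as [ue Cue].
  destruct (completeness E HEb (ex_intro _ _ (ex_intro _ ue (conj Cue eq_refl)))) as [M [HMub HMlub]].
  assert (Hlow : forall u, C u -> - M <= dot n p (psi u)).
  { intros u Cu. assert (- dot n p (psi u) <= M) by (apply HMub; exists u; auto). lra. }
  assert (Hu1 : exists u1, C u1 /\ dot n p (psi u1) < - M + eta / 2).
  { apply NNPP. intro Hno. assert (M <= M - eta / 2); [|lra].
    apply HMlub. intros z [u [Cu ->]]. apply Rnot_lt_le. intro. apply Hno. exists u. split; auto. lra. }
  destruct Hu1 as [u1 [Cu1 Hu1]].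
  set (Pb := dot n p (psi b)).
  assert (HPb : 0 <= Pb) by (apply dot_nonneg; auto; intros; left; auto).
  set (sm := Rmin 1 (eta / (2 * (1 + Pb)))).
  assert (Hsm : 0 < sm <= 1).
  { split. apply Rmin_pos. lra. apply Rdiv_lt_0_compat; lra. apply Rmin_l. }
  assert (HsmPb : sm * Pb <= eta / 2).
  { assert (sm <= eta / (2 * (1 + Pb))) by apply Rmin_r.
    apply Rle_trans with (eta / (2 * (1 + Pb)) * Pb). apply Rmult_le_compat_r; auto.
    apply Rmult_le_reg_r with (2 * (1 + Pb)). lra. field_simplify; nra. }
  set (u0 := fun j => sm * b j + (1 - sm) * u1 j).
  assert (RIu0 : RI C u0) by (apply (RI_mix d C HC); auto).
  assert (Cu0 : C u0) by apply RIu0.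
  assert (Hopt : forall u, C u -> dot n p (psi u0) <= dot n p (psi u) + eta).
  { intros u Cu. pose proof (dot_conv p b u1 sm Cb Cu1 ltac:(lra) (fun i Hi => Rlt_le _ _ (Hp i Hi))).
    fold u0 in H. fold Pb in H. pose proof (Hlow u Cu).
    assert (0 <= dot n p (psi u1)) by (apply dot_nonneg; auto; intros; left; auto). nra. }
  destruct (coupled n d C psi p u0 eta n_pos HC Hcv Hp RIu0 Hopt) as [gam [Hgs Hgi]].
  set (A := fun k' j => rsum n (fun a => gam a k' / p a * xv j a)).
  destruct (LA m d A Hdm) as [lam0 [[k0 [Hk0 Hnz]] Hrows]].
  destruct (argmax_abs m lam0 ltac:(lia)) as [j0 [Hj0 Hmax]].
  assert (Hpos : 0 < Rabs (lam0 j0)).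
  { pose proof (Hmax k0 Hk0). pose proof (Rabs_pos_lt _ Hnz). lra. }
  set (lam := fun j => lam0 j / Rabs (lam0 j0)).
  exists u0, lam. split; auto. split; auto. split.
  { intros j Hj. pose proof (Hmax j Hj). unfold lam.
    assert (Rabs (lam0 j / Rabs (lam0 j0)) <= 1).
    { unfold Rdiv. rewrite Rabs_mult, Rabs_inv, Rabs_Rabsolu. apply Rmult_le_reg_r with (Rabs (lam0 j0)); auto.
      rewrite Rmult_assoc, Rinv_l by lra. lra. }
    revert H0. unfold Rabs. destruct (Rcase_abs _); lra. }
  split.
  { exists j0. split; auto. unfold lam, Rdiv. rewrite Rabs_mult, Rabs_inv, Rabs_Rabsolu. field. lra. }
  intros tau u Hq Cu.
  set (q := fun i => p i + tau * vec lam i) in *.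
  assert (Hzero : forall k', (k' < d)%nat -> rsum n (fun a => q a / p a * gam a k') = 0).
  { intros k' Hk'.
    rewrite (rsum_ext n _ (fun a => gam a k' + tau * (vec lam a * gam a k' / p a))) by (intros a Ha; unfold q; field; pose proof (Hp a Ha); lra).
    rewrite rsum_plus, rsum_scal, Hgs.
    assert (rsum n (fun a => vec lam a * gam a k' / p a) = 0); [|rewrite H; ring].
    unfold vec. rewrite (rsum_ext n _ (fun a => rsum m (fun j => lam j * (gam a k' / p a * xv j a)))).
    - rewrite rsum_swap. specialize (Hrows k' Hk'). unfold A in Hrows.
      rewrite (rsum_ext m _ (fun j => / Rabs (lam0 j0) * (rsum n (fun a => gam a k' / p a * xv j a) * lam0 j))).
      rewrite rsum_scal, Hrows. ring.
      intros j Hj. rewrite rsum_scal. unfold lam. unfold Rdiv at 1. ring.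
    - intros a Ha. unfold Rdiv. rewrite <- !rsum_scal_r. apply rsum_ext. intros; ring. }
  assert (Hsum : rsum n (fun a => q a / p a * rsum d (fun k' => gam a k' * (u k' - u0 k'))) <=
                 rsum n (fun a => q a / p a * (p a * (psi u a - psi u0 a) + eta))).
  { apply rsum_le. intros a Ha. apply Rmult_le_compat_l. apply Rdiv_le_0_compat; [apply Hq; auto|auto]. apply Hgi; auto. }
  assert (HL : rsum n (fun a => q a / p a * rsum d (fun k' => gam a k' * (u k' - u0 k'))) = 0).
  { rewrite (rsum_ext n _ (fun a => rsum d (fun k' => (u k' - u0 k') * (q a / p a * gam a k')))) by (intros; rewrite <- rsum_scal; apply rsum_ext; intros; ring).
    rewrite rsum_swap. apply rsum_zero. intros k' Hk'. rewrite rsum_scal, Hzero; auto. ring. }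
  rewrite (rsum_ext n (fun a => q a / p a * (p a * (psi u a - psi u0 a) + eta)) (fun a => (q a * psi u a - q a * psi u0 a) + eta * (q a / p a))) in Hsum
    by (intros a Ha; field; pose proof (Hp a Ha); lra).
  rewrite HL, rsum_plus, rsum_minus, rsum_scal in Hsum. unfold dot. unfold q in Hsum |- *. lra.
Qed.

Lemma vec_bound lam i : (forall j, (j < m)%nat -> -1 <= lam j <= 1) ->
  Rabs (vec lam i) <= rsum m (fun j => Rabs (xv j i)).
Proof.
  intros H. unfold vec. eapply Rle_trans. apply rsum_abs. apply rsum_le. intros j Hj.
  rewrite Rabs_mult. specialize (H j Hj). assert (Rabs (lam j) <= 1) by (unfold Rabs; destruct (Rcase_abs _); lra).
  pose proof (Rabs_pos (xv j i)). pose proof (Rabs_pos (lam j)). nra.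
Qed.

Lemma vec_diff lam lam' i rho : (forall j, (j < m)%nat -> Rabs (lam j - lam' j) <= rho) ->
  Rabs (vec lam i - vec lam' i) <= rho * rsum m (fun j => Rabs (xv j i)).
Proof.
  intros H. unfold vec. rewrite <- rsum_minus. eapply Rle_trans. apply rsum_abs.
  rewrite <- rsum_scal. apply rsum_le. intros j Hj.
  replace (lam j * xv j i - lam' j * xv j i) with ((lam j - lam' j) * xv j i) by ring.
  rewrite Rabs_mult. specialize (H j Hj). pose proof (Rabs_pos (xv j i)). pose proof (Rabs_pos (lam j - lam' j)). nra.
Qed.

Lemma final : False.
Proof.
  set (P := fun (N : nat) (u0 lam : nat -> R) => C u0 /\ (forall u, C u -> dot n p (psi u0) <= dot n p (psi u) + / INR (S N)) /\
    (forall j, (j < m)%nat -> -1 <= lam j <= 1) /\ (exists j, (j < m)%nat /\ Rabs (lam j) = 1) /\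
    forall tau u, (forall i, (i < n)%nat -> 0 <= p i + tau * vec lam i) -> C u ->
      dot n (fun i => p i + tau * vec lam i) (psi u0) <= dot n (fun i => p i + tau * vec lam i) (psi u) +
        / INR (S N) * rsum n (fun i => (p i + tau * vec lam i) / p i)).
  assert (F : forall N, {pr : (nat -> R) * (nat -> R) | P N (fst pr) (snd pr)}).
  { intros N. apply constructive_indefinite_description.
    assert (0 < / INR (S N)) by (apply Rinv_0_lt_compat, lt_0_INR; lia).
    destruct (key _ H) as [u0 [lam HH]]. exists (u0, lam). exact HH. }
  set (U0 := fun N => fst (proj1_sig (F N))).
  set (Lam := fun N => snd (proj1_sig (F N))).
  assert (HP : forall N, P N (U0 N) (Lam N)) by (intros N; exact (proj2_sig (F N))).
  destruct (BW_adh m (fun N j => Lam N j)) as [Ls HLs].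
  { intros N j Hj. apply (proj1 (proj2 (proj2 (HP N)))); auto. }
  assert (Lsb : forall j, (j < m)%nat -> -1 <= Ls j <= 1).
  { intros j Hj. split; apply Rnot_lt_le; intro Hc.
    - destruct (HLs (-1 - Ls j) ltac:(lra) O) as [N [_ HN]]. specialize (HN j Hj).
      pose proof (proj1 (proj2 (proj2 (HP N))) j Hj). revert HN. unfold Rabs; destruct (Rcase_abs _); lra.
    - destruct (HLs (Ls j - 1) ltac:(lra) O) as [N [_ HN]]. specialize (HN j Hj).
      pose proof (proj1 (proj2 (proj2 (HP N))) j Hj). revert HN. unfold Rabs; destruct (Rcase_abs _); lra. }
  assert (Lsnz : exists j, (j < m)%nat /\ Ls j <> 0).
  { apply NNPP. intro Hno. destruct (HLs (1/2) ltac:(lra) O) as [N [_ HN]].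
    destruct (proj1 (proj2 (proj2 (proj2 (HP N))))) as [j [Hj Hj1]].
    specialize (HN j Hj). assert (Ls j = 0) by (apply NNPP; intro; apply Hno; exists j; auto).
    rewrite H, Rminus_0_r in HN. lra. }
  set (Xa := fun i => rsum m (fun j => Rabs (xv j i))).
  assert (HXa : forall i, 0 <= Xa i) by (intros; apply rsum_nonneg; intros; apply Rabs_pos).
  destruct (finite_min n (fun i r => r * Xa i <= p i / 2)) as [eps [Heps Hepsi]].
  { intros i Hi. exists (p i / (2 * (1 + Xa i))). pose proof (Hp i Hi). pose proof (HXa i). split.
    apply Rdiv_lt_0_compat; lra. apply Rmult_le_reg_r with (2 * (1 + Xa i)). lra. field_simplify; nra. }
  { intros i r r' Hi H1 H2. pose proof (HXa i). nra. }
  set (vs := vec Ls).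
  assert (Hvs : forall i, Rabs (vs i) <= Xa i) by (intros; apply vec_bound; auto).
  assert (HvN : forall N i, Rabs (vec (Lam N) i) <= Xa i) by (intros; apply vec_bound; apply (proj1 (proj2 (proj2 (HP N))))).
  assert (Hsimp : forall tau, Rabs tau <= eps -> in_simplex n (fun i => p i + tau * vs i)).
  { intros tau Ht. split.
    - intros i Hi. pose proof (Hepsi i Hi). pose proof (Hvs i). pose proof (Hp i Hi). pose proof (HXa i).
      assert (Rabs (tau * vs i) <= eps * Xa i) by (rewrite Rabs_mult; apply Rmult_le_compat; auto; apply Rabs_pos).
      revert H3. unfold Rabs at 1. destruct (Rcase_abs _); nra.
    - rewrite rsum_plus, rsum_scal. unfold vs. rewrite vec_sum. lra. }
  assert (Hepsabs : Rabs eps <= eps) by (rewrite Rabs_right; lra).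
  assert (Hmepsabs : Rabs (- eps) <= eps) by (rewrite Rabs_Ropp, Rabs_right; lra).
  destruct (Hcal _ (Hsimp eps Hepsabs)) as [r1 [Hbad1 [u1 [Cu1 Hu1]]]].
  destruct (Hcal _ (Hsimp (- eps) Hmepsabs)) as [r2 [Hbad2 [u2 [Cu2 Hu2]]]].
  set (fq := fun tau u => dot n (fun i => p i + tau * vs i) (psi u)) in *.
  set (gap := Rmin (r1 - fq eps u1) (r2 - fq (- eps) u2)).
  assert (Hgap : 0 < gap) by (unfold gap, fq; cbv beta; apply Rmin_pos; lra).
  set (B0 := dot n p (psi u1) + 1).
  assert (HB0 : forall N i, (i < n)%nat -> psi (U0 N) i <= B0 / p i).
  { intros N i Hi. destruct (HP N) as [CU [Hopt _]]. specialize (Hopt u1 Cu1).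
    assert (/ INR (S N) <= 1). { rewrite <- Rinv_1. apply Rinv_le_contravar; [lra|]. rewrite S_INR. pose proof (pos_INR N). lra. }
    assert (p i * psi (U0 N) i <= dot n p (psi (U0 N))).
    { apply (term_le_rsum n (fun i => p i * psi (U0 N) i)); auto. intros j Hj. apply Rmult_le_pos. left; auto. apply Hnn; auto. }
    pose proof (Hp i Hi). apply Rmult_le_reg_l with (p i); auto. unfold B0. field_simplify; [|lra]. lra. }
  set (Err := rsum n (fun i => Xa i * (B0 / p i + psi u1 i + psi u2 i))).
  assert (HErr : 0 <= Err).
  { apply rsum_nonneg. intros i Hi. apply Rmult_le_pos; auto. pose proof (Hp i Hi).
    assert (0 <= B0 / p i). { apply Rdiv_le_0_compat; auto. unfold B0. pose proof (dot_nonneg p u1 Cu1 (fun j Hj => Rlt_le _ _ (Hp j Hj))). lra. }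
    pose proof (Hnn u1 Cu1 i Hi). pose proof (Hnn u2 Cu2 i Hi). lra. }
  set (rho := gap / (4 * (eps * Err + 1))).
  assert (Hrho : 0 < rho) by (unfold rho; apply Rdiv_lt_0_compat; nra).
  assert (Hrho2 : eps * rho * Err <= gap / 4).
  { unfold rho. apply Rmult_le_reg_r with (4 * (eps * Err + 1)). nra. field_simplify; nra. }
  destruct (archimed (8 * INR n / gap)) as [Harch _].
  set (N0 := Z.to_nat (up (8 * INR n / gap))).
  assert (HN0 : 8 * INR n / gap < INR N0) by (pose proof (IZR_le_INR_to_nat (up (8 * INR n / gap))); unfold N0; lra).
  destruct (HLs rho Hrho N0) as [N [HNN0 Hclose]].
  destruct (HP N) as [CU [Hopt [Hlb [_ Hsub]]]].
  assert (Heta : / INR (S N) * (2 * INR n) <= gap / 4).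
  { assert (INR N0 <= INR N) by (apply le_INR; auto).
    assert (0 < INR (S N)) by (apply lt_0_INR; lia). rewrite S_INR in *.
    apply Rmult_le_reg_l with (INR N + 1); [lra|]. field_simplify; [|lra].
    assert (8 * INR n / gap * gap = 8 * INR n) by (field; lra).
    assert (8 * INR n < INR N0 * gap) by (apply Rmult_lt_compat_r with (r := gap) in HN0; lra). nra. }
  assert (Trans : forall tau u', (tau = eps \/ tau = - eps) -> (u' = u1 \/ u' = u2) ->
            fq tau (U0 N) <= fq tau u' + gap / 2).
  { intros tau u' Htau Hu'.
    assert (Hta : Rabs tau = eps) by (destruct Htau; subst; [rewrite Rabs_right; lra|rewrite Rabs_Ropp, Rabs_right; lra]).
    assert (Hnq : forall i, (i < n)%nat -> 0 <= p i + tau * vec (Lam N) i /\ (p i + tau * vec (Lam N) i) / p i <= 2).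
    { intros i Hi. pose proof (Hepsi i Hi). pose proof (HvN N i). pose proof (Hp i Hi). pose proof (HXa i).
      assert (Rabs (tau * vec (Lam N) i) <= eps * Xa i) by (rewrite Rabs_mult, Hta; apply Rmult_le_compat_l; lra).
      assert (- (p i / 2) <= tau * vec (Lam N) i <= p i / 2) by (revert H3; unfold Rabs; destruct (Rcase_abs _); lra).
      split. lra. apply Rmult_le_reg_r with (p i); auto. field_simplify; lra. }
    assert (Cu' : C u') by (destruct Hu'; subst; auto).
    pose proof (Hsub tau u' (fun i Hi => proj1 (Hnq i Hi)) Cu') as Hk.
    assert (Hr : rsum n (fun i => (p i + tau * vec (Lam N) i) / p i) <= 2 * INR n).
    { rewrite <- (Rmult_comm (INR n)), <- rsum_const. apply rsum_le. intros i Hi. apply Hnq; auto. }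
    assert (Hk2 : dot n (fun i => p i + tau * vec (Lam N) i) (psi (U0 N)) <= dot n (fun i => p i + tau * vec (Lam N) i) (psi u') + gap / 4).
    { assert (0 <= / INR (S N)) by (left; apply Rinv_0_lt_compat, lt_0_INR; lia).
      assert (/ INR (S N) * rsum n (fun i => (p i + tau * vec (Lam N) i) / p i) <= / INR (S N) * (2 * INR n)) by (apply Rmult_le_compat_l; auto).
      lra. }
    unfold fq. rewrite !dot_lin. rewrite !dot_lin in Hk2.
    assert (Hdiff : Rabs (tau * (dot n vs (psi (U0 N)) - dot n vs (psi u')) - tau * (dot n (vec (Lam N)) (psi (U0 N)) - dot n (vec (Lam N)) (psi u'))) <= eps * rho * Err).
    { assert (Eq : rsum n (fun i => (vs i - vec (Lam N) i) * (psi (U0 N) i - psi u' i)) = (dot n vs (psi (U0 N)) - dot n vs (psi u')) - (dot n (vec (Lam N)) (psi (U0 N)) - dot n (vec (Lam N)) (psi u'))).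
      { unfold dot. rewrite <- !rsum_minus. apply rsum_ext. intros; ring. }
      replace (tau * (dot n vs (psi (U0 N)) - dot n vs (psi u')) - tau * (dot n (vec (Lam N)) (psi (U0 N)) - dot n (vec (Lam N)) (psi u')))
        with (tau * rsum n (fun i => (vs i - vec (Lam N) i) * (psi (U0 N) i - psi u' i))) by (rewrite Eq; ring).
      rewrite Rabs_mult, Hta. rewrite Rmult_assoc. apply Rmult_le_compat_l; [lra|].
      eapply Rle_trans. apply rsum_abs. unfold Err. rewrite <- rsum_scal. apply rsum_le. intros i Hi.
      rewrite Rabs_mult.
      assert (Hd : Rabs (vs i - vec (Lam N) i) <= rho * Xa i).
      { unfold vs. apply vec_diff. intros j Hj. specialize (Hclose j Hj). rewrite Rabs_minus_sym. left; auto. }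
      assert (Hp2 : Rabs (psi (U0 N) i - psi u' i) <= B0 / p i + psi u1 i + psi u2 i).
      { pose proof (HB0 N i Hi). pose proof (Hnn _ CU i Hi). pose proof (Hnn u1 Cu1 i Hi). pose proof (Hnn u2 Cu2 i Hi).
        assert (psi u' i <= psi u1 i + psi u2 i) by (destruct Hu'; subst; lra).
        assert (0 <= psi u' i) by (destruct Hu'; subst; lra).
        unfold Rabs; destruct (Rcase_abs _); lra. }
      pose proof (Rabs_pos (vs i - vec (Lam N) i)). pose proof (Rabs_pos (psi (U0 N) i - psi u' i)).
      apply Rle_trans with ((rho * Xa i) * (B0 / p i + psi u1 i + psi u2 i)).
      apply Rmult_le_compat; auto. right; ring. }
    revert Hdiff. unfold Rabs; destruct (Rcase_abs _); intros; lra. }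
  assert (A1 : in_argmin n k L (fun i => p i + eps * vs i) (pred (U0 N))).
  { apply NNPP. intro Hn. specialize (Hbad1 _ CU Hn). pose proof (Trans eps u1 (or_introl eq_refl) (or_introl eq_refl)) as T.
    assert (G1 : gap <= r1 - fq eps u1) by apply Rmin_l. unfold fq in T, G1. cbv beta in T, G1. lra. }
  assert (A2 : in_argmin n k L (fun i => p i + - eps * vs i) (pred (U0 N))).
  { apply NNPP. intro Hn. specialize (Hbad2 _ CU Hn). pose proof (Trans (- eps) u2 (or_intror eq_refl) (or_intror eq_refl)) as T.
    assert (G1 : gap <= r2 - fq (- eps) u2) by apply Rmin_r. unfold fq in T, G1. cbv beta in T, G1. lra. }
  destruct A1 as [Ht A1]. destruct A2 as [_ A2].
  destruct Lsnz as [j [Hj Hjnz]]. apply Hjnz.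
  apply (inj Ls (pred (U0 N))); auto.
  intros t' Ht'. specialize (A1 t' Ht'). specialize (A2 t' Ht').
  rewrite !dot_lin, !Hpc in A1, A2 by auto. fold vs. 
  assert (eps * dot n vs (col L (pred (U0 N))) <= eps * dot n vs (col L t')) by lra.
  assert (eps * dot n vs (col L t') <= eps * dot n vs (col L (pred (U0 N)))) by lra.
  apply Rmult_le_reg_l in H; auto. apply Rmult_le_reg_l in H0; auto. lra.
Qed.

End Main.


Theorem mainTheorem14 (n k : nat) (L : nat -> nat -> R) :
  nonneg_matrix n k L ->
  standing_assumption n k L ->
  (exists (p : nat -> R) (c : R),
      in_relint_simplex n p /\ 0 <= c /\
      forall t, (t < k)%nat -> dot n p (col L t) = c) ->
  forall m : nat, is_affdim n k L m ->
  forall d : nat, CCdim_admissible n k L d -> (m - 1 <= d)%nat.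
Proof.
  intros HnL Hst [p [c [[Hp Hp1] [Hc Hpc]]]] m [[s [[NDs [Hsk Haff]] Hlen]] _] d
    [C [psi [HC [Hnn [Hcv [pred [Hpred Hcal]]]]]]].
  destruct (Compare_dec.le_lt_dec m d) as [H|H]; [lia|].
  exfalso. eapply (final n k d m L p c s C psi pred); eauto.
Qed.
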